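(* Let $G$ be a multitriangulation of the projective plane. Then $G$ has a vertex of degree $2$, $3$, $4$ or $6$, or two adjacent vertices of degree $5$.
   Context: A multitriangulation of a surface is a loopless multigraph 2-cell embedded on the surface such that every facial closed walk has length 3. *)

(* Defs.v *)
From mathcomp Require Import all_boot.
Set Implicit Arguments. Unset Strict Implicit. Unset Printing Implicit Defensive.

(* Cellular embeddings of (multi)graphs in (possibly non-orientable) closed
   surfaces, encoded combinatorially as graph-encoded maps (gems / generalized
   maps): a finite set T of flags with three fixed-point-free involutions
   a0 (change vertex), a1 (change edge), a2 (change face) such that
   a0 a2 = a2 a0 is a fixed-point-free involution.
   vertices = <a1,a2>-orbits, edges = <a0,a2>-orbits, faces = <a0,a1>-orbits. *)

Section Gem.
Variable T : finType.

Definition rel2 (f g : T -> T) : rel T := fun x y => (y == f x) || (y == g x).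

Definition orb2 (f g : T -> T) (x : T) : {set T} := [set y | connect (rel2 f g) x y].

Variables a0 a1 a2 : T -> T.

Definition vertex_of x := orb2 a1 a2 x.
Definition edge_of x := orb2 a0 a2 x.
Definition face_of x := orb2 a0 a1 x.

Definition nvertices := #|[set vertex_of x | x in T]|.
Definition nedges := #|[set edge_of x | x in T]|.
Definition nfaces := #|[set face_of x | x in T]|.

(* degree of the vertex containing flag x (each edge-end = 2 flags) *)
Definition degree x := #|vertex_of x| %/ 2.

Definition is_gem :=
  [/\ involutive a0, involutive a1, involutive a2,
      (forall x, [/\ a0 x != x, a1 x != x & a2 x != x]) &
      (forall x, a0 (a2 x) = a2 (a0 x) /\ a0 (a2 x) != x)].

Definition gem_connected :=
  forall x y, connect (fun u v => [|| v == a0 u, v == a1 u | v == a2 u]) x y.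

(* the surface is orientable iff the flag graph is bipartite *)
Definition gem_orientable :=
  exists s : T -> bool, forall x,
    [/\ s (a0 x) != s x, s (a1 x) != s x & s (a2 x) != s x].

(* cellular embedding of a connected multigraph in the projective plane:
   connected, non-orientable, Euler characteristic V - E + F = 1 *)
Definition projective_plane_map :=
  [/\ is_gem, gem_connected, ~ gem_orientable &
      nvertices + nfaces = nedges + 1].

(* no loops: the two ends of every edge lie at distinct vertices *)
Definition loopless := forall x, a0 x \notin vertex_of x.

(* every facial closed walk has length 3 (a face of length k has 2k flags) *)
Definition triangular := forall x, #|face_of x| = 6.

Definition multitriangulation_pp :=
  [/\ projective_plane_map, loopless & triangular].

End Gem.

(* Main.v *)
Require Import Defs.
From mathcomp Require Import all_boot zify.
Set Implicit Arguments. Unset Strict Implicit. Unset Printing Implicit Defensive.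

Lemma sum_classes (T : finType) (cls : T -> {set T}) (Q : pred {set T}) :
 (forall x, x \in cls x) -> (forall x y, y \in cls x -> cls y = cls x) ->
 \sum_(A in [set cls x | x in T] | Q A) #|A| = #|[set x | Q (cls x)]|.
Proof.
move=> refl cl.
rewrite -sum1_card.
rewrite (partition_big cls (fun A => (A \in [set cls x | x in T]) && Q A)); last first.
  by move=> x; rewrite inE => Qx; rewrite imset_f ?inE.
apply: eq_bigr => A /andP [/imsetP [y _ ->] QA].
rewrite -sum1_card; apply: eq_bigl => x; rewrite inE.
case: (boolP (x \in cls y)) => H.
  by rewrite (cl _ _ H) eqxx QA.
have [E|NE] := eqVneq (cls x) (cls y); last by rewrite andbF.
case/negP: H; rewrite -E; exact: refl.
Qed.

Lemma closed_connect (T : finType) (e : rel T) (S : {set T}) x y :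
  x \in S -> (forall u v, u \in S -> e u v -> v \in S) -> connect e x y -> y \in S.
Proof.
move=> Sx cl /connectP [p]; elim: p x Sx => [|z p IH] x Sx /=; first by move=> _ ->.
case/andP=> exz pz ly; exact: IH (cl _ _ Sx exz) pz ly.
Qed.

Lemma orb2_refl (T : finType) f g (x : T) : x \in orb2 f g x.
Proof. by rewrite inE connect0. Qed.

Lemma orb2_f (T : finType) f g (x : T) : f x \in orb2 f g x.
Proof. by rewrite inE connect1 // /rel2 eqxx. Qed.

Lemma orb2_g (T : finType) f g (x : T) : g x \in orb2 f g x.
Proof. by rewrite inE connect1 // /rel2 eqxx orbT. Qed.

Lemma orb2_trans (T : finType) f g (x y z : T) :
  y \in orb2 f g x -> z \in orb2 f g y -> z \in orb2 f g x.
Proof. rewrite !inE; exact: connect_trans. Qed.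

Lemma orb2_same (T : finType) (f g : T -> T) : involutive f -> involutive g ->
  forall x y, y \in orb2 f g x -> orb2 f g y = orb2 f g x.
Proof.
move=> If Ig.
have sym : connect_sym (rel2 f g).
  apply: sym_connect_sym => u v; rewrite /rel2.
  apply/idP/idP => /orP [] /eqP ->; by rewrite ?If ?Ig eqxx ?orbT.
move=> x y; rewrite inE => xy; apply/setP => z; rewrite !inE.
apply/idP/idP => H; first exact: connect_trans xy H.
by apply: connect_trans H; rewrite sym.
Qed.

Lemma orb2_fS (T : finType) (f g : T -> T) x y : y \in orb2 f g x -> f y \in orb2 f g x.
Proof. move=> H; exact: orb2_trans H (orb2_f _ _ _). Qed.
Lemma orb2_gS (T : finType) (f g : T -> T) x y : y \in orb2 f g x -> g y \in orb2 f g x.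
Proof. move=> H; exact: orb2_trans H (orb2_g _ _ _). Qed.
Ltac orb_solve := repeat (apply: orb2_fS || apply: orb2_gS); apply: orb2_refl.

Lemma card_classes_const (T : finType) (cls : T -> {set T}) k :
 (forall x, x \in cls x) -> (forall x y, y \in cls x -> cls y = cls x) ->
 (forall x, #|cls x| = k) -> #|T| = #|[set cls x | x in T]| * k.
Proof.
move=> refl cl ck; have := sum_classes predT refl cl.
rewrite (eq_bigl (mem [set cls x | x in T])); last by move=> A; rewrite andbT.
rewrite (eq_bigr (fun _ => k)); last by move=> A /imsetP [y _ ->].
rewrite sum_nat_const => ->; rewrite -cardsT; apply: eq_card => x; by rewrite !inE.
Qed.

Lemma sum_ge (T : finType) (P : {set {set T}}) (Q : pred {set T}) k :
  (forall A, A \in P -> Q A -> k <= #|A|) ->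
  #|[set A in P | Q A]| * k <= \sum_(A in P | Q A) #|A|.
Proof.
move=> H; rewrite -sum_nat_const.
rewrite (eq_bigl (fun A => (A \in P) && Q A)); last by move=> A; rewrite inE.
by apply: leq_sum => A /andP [] ; apply: H.
Qed.

Lemma card4le (T : finType) (a b c d : T) : #|a |: (b |: (c |: [set d]))| <= 4.
Proof. by rewrite !cardsU1 cards1; do 3 case: (_ \notin _). Qed.

Section Gem.
Variable T : finType.
Variables a0 a1 a2 : T -> T.
Hypothesis gem : is_gem a0 a1 a2.
Hypothesis tri : triangular a0 a1.

Lemma I0 : involutive a0. Proof. by case: gem. Qed.
Lemma I1 : involutive a1. Proof. by case: gem. Qed.
Lemma I2 : involutive a2. Proof. by case: gem. Qed.
Lemma fp0 x : a0 x != x. Proof. by case: gem => _ _ _ H _; case: (H x). Qed.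
Lemma fp1 x : a1 x != x. Proof. by case: gem => _ _ _ H _; case: (H x). Qed.
Lemma fp2 x : a2 x != x. Proof. by case: gem => _ _ _ H _; case: (H x). Qed.
Lemma comm02 x : a0 (a2 x) = a2 (a0 x). Proof. by case: gem => _ _ _ _ H; case: (H x). Qed.
Lemma fp02 x : a0 (a2 x) != x. Proof. by case: gem => _ _ _ _ H; case: (H x). Qed.

Definition r y := a1 (a0 y).

Lemma r_inj : injective r.
Proof. by move=> u v; rewrite /r => /(can_inj I1) /(can_inj I0). Qed.

Lemma iter_r_inj k : injective (iter k r).
Proof. elim: k => [//|k IH] u v /= /r_inj; exact: IH. Qed.

Lemma comm_r k y : iter k r (a0 (iter k r y)) = a0 y.
Proof.
have h : forall z, r (a0 (r z)) = a0 z by move=> z; rewrite /r I0 I1.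
by elim: k => [//|k IH]; rewrite iterSr iterS h.
Qed.

Lemma no_a0_cycle n y : a0 y != iter n r y.
Proof.
rewrite -[n](odd_double_half n); set k := n./2.
rewrite -(comm_r k y); case: (odd n).
  have -> : true + k.*2 = k + k.+1 by rewrite /=; lia.
  rewrite iterD; apply/negP => /eqP /iter_r_inj E.
  by move: (fp1 (a0 (iter k r y))); rewrite -/(r _) E /= eqxx.
have -> : false + k.*2 = k + k by rewrite /=; lia.
rewrite iterD; apply/negP => /eqP /iter_r_inj E.
by move: (fp0 (iter k r y)); rewrite E eqxx.
Qed.

Lemma no_a0_cycle2 i j y : a0 (iter i r y) != iter j r y.
Proof.
apply/negP => /eqP E; move: (no_a0_cycle (i + j) y).
by rewrite -(comm_r i y) E -iterD addnC eqxx.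
Qed.

Lemma face_closed (S : {set T}) x : x \in S ->
  (forall u, u \in S -> a0 u \in S) -> (forall u, u \in S -> a1 u \in S) ->
  face_of a0 a1 x \subset S.
Proof.
move=> Sx c0 c1; apply/subsetP => y; rewrite inE.
move=> H; apply: (@closed_connect _ _ S x y Sx _ H) => u v Su /orP [] /eqP ->; auto.
Qed.

Lemma r3 x : iter 3 r x = x.
Proof.
have F : #|face_of a0 a1 x| = 6 by apply: tri.
have r2 : r (r x) != x.
  apply/negP => /eqP E.
  have h1 : a1 x = a0 (r x) by rewrite -{1}E /r I1.
  have h2 : a1 (r x) = a0 x by rewrite /r I1.
  have h3 : a1 (a0 x) = r x by [].
  have h4 : a1 (a0 (r x)) = x by rewrite -{2}E.
  have : face_of a0 a1 x \subset (x |: (r x |: (a0 x |: [set a0 (r x)]))).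
  apply: face_closed.
  - by rewrite !inE eqxx.
  - by move=> u; rewrite !inE => /or4P [] /eqP ->; rewrite ?I0 eqxx ?orbT.
  - by move=> u; rewrite !inE => /or4P [] /eqP ->; rewrite ?h1 ?h2 ?h3 ?h4 eqxx ?orbT.
  move=> /subset_leq_card; rewrite F => H; have := @card4le _ x (r x) (a0 x) (a0 (r x)).
  by move=> H2; have := leq_trans H H2.
have r1 : r x != x by apply: contra r2 => /eqP E; rewrite E E.
have r12 : r (r x) != r x by apply: contra r1 => /eqP /r_inj ->.
have n := no_a0_cycle2; have n0 := n 0; have n1 := n 1; have n2 := n 2.
rewrite /= in n0 n1 n2.
have inj0 := inj_eq (can_inj I0).
set S := x |: (r x |: (r (r x) |: (a0 x |: (a0 (r x) |: [set a0 (r (r x))])))).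
have sub : S \subset face_of a0 a1 x.
  rewrite /S !subUset !sub1set /r /face_of; repeat (apply/andP; split; first by orb_solve); orb_solve.
have N i j : (iter j r x == a0 (iter i r x)) = false.
  by rewrite eq_sym; exact: negbTE (no_a0_cycle2 i j x).
have N00 := N 0 0; have N10 := N 1 0; have N20 := N 2 0.
have N01 := N 0 1; have N11 := N 1 1; have N21 := N 2 1.
have N02 := N 0 2; have N12 := N 1 2; have N22 := N 2 2.
rewrite /= in N00 N10 N20 N01 N11 N21 N02 N12 N22.
have e1 : (x == r x) = false by rewrite eq_sym; exact: negbTE r1.
have e2 : (x == r (r x)) = false by rewrite eq_sym; exact: negbTE r2.
have e3 : (r x == r (r x)) = false by rewrite eq_sym; exact: negbTE r12.
have cardS : #|S| = 6.
  rewrite /S !cardsU1 cards1 !inE !inj0.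
  by rewrite e1 e2 e3 N00 N10 N20 N01 N11 N21 N02 N12 N22.
have SF : S = face_of a0 a1 x by apply/eqP; rewrite eqEcard sub F cardS.
have : iter 3 r x \in face_of a0 a1 x by rewrite /= /r /face_of; orb_solve.
rewrite -SF /S !inE /= => /or4P [| | |/or3P []] /eqP E.
- exact: E.
- by move: r2; rewrite (r_inj E) eqxx.
- by move: r1; rewrite (r_inj (r_inj E)) eqxx.
- by move: (N 0 3); rewrite /= E eqxx.
- by move: (N 1 3); rewrite /= E eqxx.
- by move: (N 2 3); rewrite /= E eqxx.
Qed.

Lemma r3' x : a1 (a0 (a1 (a0 x))) = a0 (a1 x).
Proof. have := r3 x; rewrite /= /r => E. by rewrite -{2}E I1 I0. Qed.

Lemma deg_a1 x : degree a1 a2 (a1 x) = degree a1 a2 x.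
Proof. by rewrite /degree /vertex_of (orb2_same I1 I2 (orb2_f a1 a2 x)). Qed.

Lemma deg_a0a0 x : degree a1 a2 (a0 (a0 x)) = degree a1 a2 x.
Proof. by rewrite I0. Qed.

Lemma ecard x : #|edge_of a0 a2 x| = 4.
Proof.
have -> : edge_of a0 a2 x = x |: (a0 x |: (a2 x |: [set a0 (a2 x)])).
  apply/eqP; rewrite eqEsubset; apply/andP; split; last first.
    rewrite !subUset !sub1set /edge_of.
    by repeat (apply/andP; split; first by orb_solve); orb_solve.
  apply/subsetP => y; rewrite inE => H.
  apply: (closed_connect _ _ H); first by rewrite !inE eqxx.
  move=> u v; rewrite !inE => Hu /orP [] /eqP ->; move: Hu;
  move=> /or4P [] /eqP ->; rewrite ?I0 ?I2 ?comm02 -?comm02 ?I2 ?I0 eqxx ?orbT //.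
have inj0 := inj_eq (can_inj I0).
have e1 : (x == a0 x) = false by rewrite eq_sym; exact: negbTE (fp0 x).
have e2 : (x == a2 x) = false by rewrite eq_sym; exact: negbTE (fp2 x).
have e3 : (x == a0 (a2 x)) = false by rewrite eq_sym; exact: negbTE (fp02 x).
have e4 : (a0 x == a2 x) = false.
  apply/negbTE; apply/negP => /eqP E; move: (fp02 x); by rewrite -E I0 eqxx.
have e5 : (a2 x == a0 (a2 x)) = false by rewrite eq_sym; exact: negbTE (fp0 _).
by rewrite !cardsU1 cards1 !inE inj0 e1 e2 e3 e4 e5.
Qed.

Hypothesis ll : loopless a0 a1 a2.

Lemma vcard x : 4 <= #|vertex_of a1 a2 x|.
Proof.
case: (eqVneq (a1 x) (a2 x)) => [E|NE].
  set z := a1 (a0 x).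
  have e : a0 z = a1 (a2 (a1 z)).
    by rewrite /z I1 -comm02 -E -[in RHS]r3' I1.
  clearbody z; have : a0 z \in vertex_of a1 a2 z by rewrite e /vertex_of; orb_solve.
  by rewrite (negbTE (ll z)).
have sub : x |: (a1 x |: (a2 x |: [set a2 (a1 x)])) \subset vertex_of a1 a2 x.
  rewrite !subUset !sub1set /vertex_of.
  repeat (apply/andP; split; first by orb_solve); orb_solve.
apply: leq_trans (subset_leq_card sub).
have inj2 := inj_eq (can_inj I2).
have e1 : (x == a1 x) = false by rewrite eq_sym; exact: negbTE (fp1 x).
have e2 : (x == a2 x) = false by rewrite eq_sym; exact: negbTE (fp2 x).
have e3 : (x == a2 (a1 x)) = false.
  apply/negbTE; apply/negP => /eqP E; move: NE; by rewrite {2}E I2 eqxx.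
have e4 : (a1 x == a2 (a1 x)) = false by rewrite eq_sym; exact: negbTE (fp2 _).
rewrite !cardsU1 cards1 !inE inj2 e1 e2 e3 e4 (negbTE NE).
by [].
Qed.

Hypothesis eul : nvertices a1 a2 + nfaces a0 a1 = nedges a0 a2 + 1.

Lemma main :
  (exists x : T, degree a1 a2 x \in [:: 2; 3; 4; 6]) \/
  (exists x : T, degree a1 a2 x = 5 /\ degree a1 a2 (a0 x) = 5).
Proof.
case: (boolP [exists x, degree a1 a2 x \in [:: 2; 3; 4; 6]]) => [/existsP [x Hx]|H1].
  by left; exists x.
case: (boolP [exists x, (degree a1 a2 x == 5) && (degree a1 a2 (a0 x) == 5)]).
  by move=> /existsP [x /andP [/eqP h1 /eqP h2]]; right; exists x.
move=> H2; exfalso.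
move/existsPn: H1 => H1; move/existsPn: H2 => H2.
have H2' x : degree a1 a2 x = 5 -> degree a1 a2 (a0 x) != 5.
  by move=> h; move: (H2 x); rewrite h eqxx.
have NF : #|T| = nfaces a0 a1 * 6.
  apply: card_classes_const; [exact: orb2_refl | exact: orb2_same I0 I1 | exact: tri].
have NE : #|T| = nedges a0 a2 * 4.
  apply: card_classes_const; [exact: orb2_refl | exact: orb2_same I0 I2 | exact: ecard].
set P := [set vertex_of a1 a2 x | x in T].
pose Q5 := fun A : {set T} => #|A| %/ 2 == 5.
have cls1 := orb2_refl a1 a2; have cls2 := orb2_same I1 I2.
have sA : \sum_(A in P | Q5 A) #|A| = #|[set x | Q5 (vertex_of a1 a2 x)]|
  := sum_classes Q5 cls1 cls2.
have sB : \sum_(A in P | predC Q5 A) #|A| = #|[set x | predC Q5 (vertex_of a1 a2 x)]|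
  := sum_classes (predC Q5) cls1 cls2.
have gA : #|[set A in P | Q5 A]| * 10 <= \sum_(A in P | Q5 A) #|A|.
  apply: sum_ge => A _ /eqP; lia.
have gB : #|[set A in P | predC Q5 A]| * 14 <= \sum_(A in P | predC Q5 A) #|A|.
  apply: sum_ge => A /imsetP [x _ ->]; rewrite /Q5 /= => h.
  have h4 := vcard x; move: (H1 x); rewrite /degree !inE.
  move: h h4; set n := #|vertex_of a1 a2 x|.
  move=> /eqP h5 h4 /norP [/eqP c2 /norP [/eqP c3 /norP [/eqP c4 /eqP c6]]]; clearbody n; lia.
have cP : #|P| = #|[set A in P | Q5 A]| + #|[set A in P | predC Q5 A]|.
  rewrite -(cardsID [set A | Q5 A] P); congr (_ + _); apply: eq_card => A;
  by rewrite !inE // andbC.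
set Aset := [set x | Q5 (vertex_of a1 a2 x)] in sA.
set Bset := [set x | predC Q5 (vertex_of a1 a2 x)] in sB.
have cT : #|T| = #|Aset| + #|Bset|.
  rewrite -(cardsC Aset); congr (_ + _); apply: eq_card => x; by rewrite !inE.
set Hit := [set y | degree a1 a2 (a0 y) == 5].
have i1 : #|Aset| <= #|Bset :&: Hit|.
  rewrite -(card_imset _ (can_inj I0)); apply: subset_leq_card.
  apply/subsetP => y /imsetP [x]; rewrite !inE => hx ->.
  rewrite deg_a0a0; apply/andP; split => //.
  exact: H2' (eqP hx).
have i2 : #|Bset :&: Hit| <= #|Bset :\: Hit|.
  rewrite -(card_imset _ (can_inj I1)); apply: subset_leq_card.
  apply/subsetP => y /imsetP [x]; rewrite !inE => /andP [hx hh] ->.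
  move: hx; rewrite /Q5 /= -/(degree a1 a2 (a1 x)) -/(degree a1 a2 x) deg_a1 => -> ; rewrite andbT.
  apply/negP => /eqP h5.
  have := H2' (a1 (a0 x)); rewrite deg_a1 (eqP hh) => /(_ erefl).
  by rewrite -deg_a1 r3' h5 eqxx.
have cB := cardsID Hit Bset.
move: eul; rewrite /nvertices -/P => eul'.
lia.
Qed.

End Gem.

Theorem lemma2p17 (T : finType) (a0 a1 a2 : T -> T) :
  multitriangulation_pp a0 a1 a2 ->
  (exists x : T, degree a1 a2 x \in [:: 2; 3; 4; 6]) \/
  (exists x : T, degree a1 a2 x = 5 /\ degree a1 a2 (a0 x) = 5).
Proof.
case=> [[gem _ _ eul] ll tri].
exact: main gem tri ll eul.
Qed.
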